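(* Let $k \geq 3$ be an integer and let $n$ be a $k$-admissible integer such that $2k+1 < n \leq 3k$. Any partial $k$-star design of order $n$ with three stars is completable.
   Context: A $k$-star is a copy of $K_{1,k}$. A partial $k$-star design of order $n$ is a pair $(V,\mathcal{A})$ where $V$ is a set of $n$ vertices and $\mathcal{A}$ is a set of edge-disjoint $k$-stars that are subgraphs of the complete graph $K_V$; it is completable if there is a set $\mathcal{B}\supseteq\mathcal{A}$ of edge-disjoint $k$-stars in $K_V$ covering all edges of $K_V$. A positive integer $n$ is $k$-admissible if $\binom{n}{2}\equiv 0 \pmod{k}$. *)

(* Defs.v *)
From mathcomp Require Import all_boot.
Set Implicit Arguments. Unset Strict Implicit. Unset Printing Implicit Defensive.

(* A star is given by its center and its set of leaves. *)
Definition star (n : nat) := ('I_n * {set 'I_n})%type.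

Definition is_kstar (n k : nat) (s : star n) : bool :=
  (s.1 \notin s.2) && (#|s.2| == k).

Definition star_edges (n : nat) (s : star n) : {set {set 'I_n}} :=
  [set [set s.1; x] | x in s.2].

Definition complete_edges (n : nat) : {set {set 'I_n}} :=
  [set e : {set 'I_n} | #|e| == 2].

Definition partial_kstar_design (n k : nat) (A : {set star n}) : Prop :=
  (forall s, s \in A -> is_kstar k s) /\
  (forall s t, s \in A -> t \in A -> s != t ->
     [disjoint star_edges s & star_edges t]).

Definition completable (n k : nat) (A : {set star n}) : Prop :=
  exists B : {set star n},
    A \subset B /\ partial_kstar_design k B /\
    \bigcup_(s in B) star_edges s = complete_edges n.

Definition admissible (k n : nat) : bool := 'C(n, 2) %% k == 0.

(* Main.v *)
Require Import Defs.
From mathcomp Require Import all_boot.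
From mathcomp Require Import zify.
Set Implicit Arguments. Unset Strict Implicit. Unset Printing Implicit Defensive.

Section Hall.
Variables (I V : finType) (allow : I -> {set V}) (D : V -> nat) (v0 : V).

Definition load (g : I -> V) (E : {set I}) v := #|[set e in E | g e == v]|.

Definition rr (E : {set I}) (g : I -> V) : rel V :=
  fun a b => [exists e in E, (g e == a) && (b \in allow e)].

Lemma load_D1 (g : I -> V) (E : {set I}) e v : e \in E ->
  load g E v = load g (E :\ e) v + (g e == v).
Proof.
move=> He; rewrite /load (cardsD1 e) addnC inE He /=; congr (_ + _).
by apply: eq_card => x; rewrite !inE; case: (x == e).
Qed.

Lemma sum_load (g : I -> V) (E : {set I}) (R : {set V}) :
  \sum_(v in R) load g E v = #|[set e in E | g e \in R]|.
Proof.
rewrite /load -sum1_card (partition_big g (mem R)) /=; last first.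
  by move=> e; rewrite inE => /andP[].
apply: eq_bigr => v Hv; rewrite -sum1_card; apply: eq_bigl => e.
rewrite !inE; case: (g e =P v) => [->|]; rewrite ?Hv ?andbT ?andbF //.
Qed.

Definition valid (g : I -> V) (E : {set I}) := forall e, e \in E -> g e \in allow e.

Lemma shift (E : {set I}) (p : seq V) : forall (g : I -> V) (x : V),
  valid g E -> path (rr E g) x p -> uniq (x :: p) ->
  exists g', valid g' E /\ forall v, load g' E v + (v == x) = load g E v + (v == last x p).
Proof.
elim: p => [|x1 p IH] g x Hg.
  by move=> _ _; exists g; split.
rewrite /= => /andP[/existsP[e /and3P[He /eqP gex Hx1]] Hp] /andP[Hx Hu].
pose g1 := fun e' => if e' == e then x1 else g e'.
have Hg1 : valid g1 E.
  by move=> e' He'; rewrite /g1; case: (eqVneq e' e) => [->|_]; [|apply: Hg].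
have Hl1 : forall v, load g1 E v + (v == x) = load g E v + (v == x1).
  move=> v; rewrite (load_D1 g1 v He) (load_D1 g v He).
  have -> : load g1 (E :\ e) v = load g (E :\ e) v.
    rewrite /load; apply: eq_card => y; rewrite !inE /g1.
    by case: (eqVneq y e).
  rewrite /g1 eqxx gex (eq_sym x1) (eq_sym x).
move: (nat_of_bool (v == x)) (nat_of_bool (v == x1)) => a b; lia.
have Hp1 : path (rr E g1) x1 p.
  apply: (@sub_in_path _ [pred a | a != x] (rr E g)); last by [].
    move=> a b Ha _ /existsP[e' /and3P[He' /eqP ga Hb]].
    apply/existsP; exists e'; rewrite He' Hb andbT /g1.
    case: (eqVneq e' e) => [E'|ne]; last by rewrite ga eqxx.
    by move: Ha; rewrite inE -ga E' gex eqxx.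
  apply/allP => y Hy; rewrite inE; apply/negP => /eqP Exy.
  by move: Hx; rewrite -Exy Hy.
have [g' [Hg' Hl']] := IH g1 x1 Hg1 Hp1 Hu.
exists g'; split => // v.
have := Hl' v; have := Hl1 v; rewrite /=.
move: (nat_of_bool (v == x)) (nat_of_bool (v == x1)) (nat_of_bool (v == last x1 p)) => a b c; lia.
Qed.

Lemma hall_cap (E : {set I}) :
  (forall S : {set V}, #|[set e in E | allow e \subset S]| <= \sum_(v in S) D v) ->
  exists g, valid g E /\ forall v, load g E v <= D v.
Proof.
move: {2}#|E| (leqnn #|E|) => m; elim: m E => [|m IH] E HE cond.
  exists (fun _ => v0); split.
    by move=> e He; move: HE; rewrite leqn0 => /eqP/cards0_eq Ee; rewrite Ee inE in He.
  by move=> v; rewrite /load; move: HE; rewrite leqn0 => /eqP/cards0_eq ->;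
     rewrite (_ : [set e in set0 | _] = set0) ?cards0 // ; apply/setP => e; rewrite !inE.
case: (set_0Vmem E) => [E0 | [e0 He0]].
  exists (fun _ => v0); split; first by move=> e; rewrite E0 inE.
  by move=> v; rewrite /load E0 (_ : [set e in set0 | _] = set0) ?cards0 //; apply/setP => e; rewrite !inE.
set E' := E :\ e0.
have HE' : #|E'| <= m by move: HE; rewrite (cardsD1 e0) He0.
have cond' : forall S : {set V}, #|[set e in E' | allow e \subset S]| <= \sum_(v in S) D v.
  move=> S; apply: leq_trans (cond S); apply: subset_leq_card.
  by apply/subsetP => e; rewrite !inE => /andP[/andP[_ ->] ->].
have [g' [Hg' Hl']] := IH E' HE' cond'.
set R := [set y | [exists x in allow e0, connect (rr E' g') x y]].
case: (boolP [exists y in R, load g' E' y < D y]).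
  case/existsP => y /andP[]; rewrite inE => /existsP[x /andP[Hx /connectP[p Hp Ey]]] Hy.
  move: Ey; case: (shortenP Hp) => p' Hp' Hu _ Ey'.
  have [g'' [Hg'' Hl'']] := shift Hg' Hp' Hu.
  exists (fun e => if e == e0 then x else g'' e); split.
    move=> e He; case: (eqVneq e e0) => [->|ne] //.
    by apply: Hg''; rewrite !inE ne.
  move=> v; rewrite (load_D1 _ v He0) eqxx.
  have -> : load (fun e => if e == e0 then x else g'' e) (E :\ e0) v = load g'' E' v.
    rewrite /load; apply: eq_card => z; rewrite !inE.
    by case: (eqVneq z e0).
  rewrite (eq_sym x) (Hl'' v) -Ey'.
  case: (eqVneq v y) => [->|_]; first by rewrite addn1.
  by rewrite addn0 Hl'.
move/existsPn => Hfull.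
have HR : forall v, v \in R -> D v <= load g' E' v.
  by move=> v Hv; move: (Hfull v); rewrite Hv /= -leqNgt.
have := cond R.
have : \sum_(v in R) D v <= \sum_(v in R) load g' E' v by apply: leq_sum.
rewrite sum_load => H1 H2.
have : #|[set e in E' | g' e \in R]| < #|[set e in E | allow e \subset R]|.
  rewrite (cardsD1 e0 [set e in E | _]) inE He0 /=.
  have -> : allow e0 \subset R.
    apply/subsetP => x Hx; rewrite inE; apply/existsP; exists x; by rewrite Hx connect0.
  rewrite add1n ltnS; apply: subset_leq_card; apply/subsetP => e.
  rewrite !inE => /andP[/andP[ne He] Hge]; rewrite ne He /=.
  apply/subsetP => y Hy; move: Hge; rewrite !inE => /existsP[x /andP[Hx Hc]].
  apply/existsP; exists x; rewrite Hx /=; apply: (connect_trans Hc); apply: connect1.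
  by apply/existsP; exists e; rewrite !inE ne He eqxx Hy.
lia.
Qed.

Lemma load_exact (g : I -> V) (E : {set I}) :
  (forall v, load g E v <= D v) -> \sum_v D v = #|E| -> forall v, load g E v = D v.
Proof.
move=> Hle Hs v; apply/eqP; rewrite eqn_leq Hle /=; rewrite leqNgt; apply/negP => Hlt.
have Hsum : \sum_v load g E v = #|E|.
  have := sum_load g E [set: V]; rewrite (eq_bigl (fun _ => true)); last by move=> z; rewrite inE.
  move->; apply: eq_card => e; rewrite !inE andbT //.
have : \sum_v load g E v < \sum_v D v.
  rewrite (bigD1 v) //= [X in _ < X](bigD1 v) //=.
  rewrite -addSn leq_add //; apply: leq_sum => z _; apply: Hle.
by rewrite Hsum Hs ltnn.
Qed.
End Hall.

Section Chunks.
Variable (T : finType) (k : nat).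

Lemma take_subset (X : {set T}) m : m <= #|X| -> exists Y : {set T}, Y \subset X /\ #|Y| = m.
Proof.
move=> Hm; exists [set x in take m (enum X)]; split.
  by apply/subsetP => x; rewrite inE => /mem_take; rewrite mem_enum.
rewrite cardsE (card_uniqP _) ?size_take ?size_enum_set -?cardE.
  by move: Hm; rewrite leq_eqVlt => /orP[/eqP->|->] //; rewrite ltnn.
by apply: take_uniq; apply: enum_uniq.
Qed.

Lemma chunks (X : {set T}) : 0 < k -> k %| #|X| ->
  exists P : {set {set T}},
    (forall B, B \in P -> B \subset X /\ #|B| = k) /\
    (forall x, x \in X -> exists2 B, B \in P & x \in B) /\
    (forall B1 B2 x, B1 \in P -> B2 \in P -> x \in B1 -> x \in B2 -> B1 = B2).
Proof.
move=> k0; move: {2}#|X| (leqnn #|X|) => m; elim: m X => [|m IH] X HX Hd.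
  exists set0; split; first by move=> B; rewrite inE.
  split; last by move=> B1 B2 x; rewrite inE.
  by move=> x Hx; move: HX; rewrite leqn0 => /eqP/cards0_eq E0; rewrite E0 inE in Hx.
case: (posnP #|X|) => [X0|Xpos].
  exists set0; split; first by move=> B; rewrite inE.
  split; last by move=> B1 B2 x; rewrite inE.
  by move=> x Hx; move/cards0_eq: X0 => E0; rewrite E0 inE in Hx.
have kX : k <= #|X| by apply: dvdn_leq.
have [Y [YX cY]] := take_subset kX.
have cXY : #|X :\: Y| = #|X| - k by rewrite cardsD (setIidPr YX) cY.
have h1 : #|X :\: Y| <= m by rewrite cXY; lia.
have h2 : k %| #|X :\: Y| by rewrite cXY dvdn_sub.
have [P [HP1 [HP2 HP3]]] := IH (X :\: Y) h1 h2.
have YnP : Y \notin P.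
  apply/negP => /HP1 [/subsetP H _].
  have : 0 < #|Y| by rewrite cY.
  rewrite card_gt0 => /set0Pn [y Hy].
  by have := H y Hy; rewrite inE Hy.
exists (Y |: P); split.
  move=> B; rewrite !inE => /orP[/eqP->|/HP1 [H1 H2]]; first by [].
  by split => //; apply: subset_trans H1 (subsetDl _ _).
split.
  move=> x Hx; case: (boolP (x \in Y)) => HxY; first by exists Y; rewrite ?setU11.
  have Hx' : x \in X :\: Y by rewrite inE HxY Hx.
  have [B HB HxB] := HP2 x Hx'.
  by exists B; rewrite // inE HB orbT.
move=> B1 B2 x; rewrite !inE => /orP[/eqP->|H1] /orP[/eqP->|H2] // Hx1 Hx2.
- by have [/subsetP S _] := HP1 _ H2; have := S x Hx2; rewrite inE Hx1.
- by have [/subsetP S _] := HP1 _ H1; have := S x Hx1; rewrite inE Hx2.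
- exact: HP3 H1 H2 Hx1 Hx2.
Qed.
End Chunks.

Lemma bin2_double m : 'C(m, 2) * 2 = m * m.-1.
Proof.
elim: m => [|m IH] //; rewrite binS bin1 mulnDl IH; case: m {IH} => [|m] //=; lia.
Qed.

Lemma star_edges_card n k (s : star n) : is_kstar k s -> #|star_edges s| = k.
Proof.
case/andP => Hc /eqP Hk; rewrite /star_edges card_in_imset // => x y Hx Hy E.
have : x \in [set s.1; y] by rewrite -E !inE eqxx orbT.
rewrite !inE => /orP[/eqP Ex|/eqP //]; by move: Hc; rewrite -Ex Hx.
Qed.

Lemma mem_star_edges n (s : star n) x : x \in s.2 -> [set s.1; x] \in star_edges s.
Proof. by move=> Hx; apply/imsetP; exists x. Qed.

Lemma arith1 n k Q : 3 <= k -> 'C(n, 2) = Q * k -> 2 * k + 1 < n -> n <= 3 * k ->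
  [/\ 2 * k + 3 <= n, n + 3 <= Q & 2 * Q <= 4 * n - 3 * k].
Proof.
move=> k3 HQ Hn1 Hn2; have H2 := bin2_double n; rewrite HQ -subn1 in H2.
have n3 : 2 * k + 3 <= n.
  case: (ltnP (2 * k + 2) n) => Hn; first lia.
  have En : n = 2 * k + 2 by lia.
  rewrite En /= in H2.
  case: (ltnP Q (2 * k + 4)) => HQ4.
    have := leq_mul HQ4 (leqnn k); nia.
  have := leq_mul HQ4 (leqnn k); nia.
split => //.
  case: (ltnP (n + 2) Q) => HQ2; first lia.
  have := leq_mul HQ2 (leqnn (n - 3)); have := leq_mul (leqnn Q) (_ : 2 * k <= n - 3); nia.
have : (3 * k - n) * (n - k) >= 0 by [].
nia.
Qed.

Lemma sum_in_mem (T : finType) (A B : {set T}) : \sum_(v in A) (v \in B) = #|A :&: B|.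
Proof.
rewrite -sum1_card [RHS](eq_bigl (fun v => (v \in A) && (v \in B))); last by move=> v; rewrite inE.
rewrite [RHS]big_mkcondr /=; apply: eq_bigr => v _; by case: (v \in B).
Qed.

Lemma sum_mem (T : finType) (B : {set T}) : \sum_v (v \in B) = #|B|.
Proof.
rewrite (eq_bigl (fun v => v \in [set: T])); last by move=> v; rewrite inE.
by rewrite sum_in_mem setTI.
Qed.

Lemma sum_eq1 (T : finType) (A : {set T}) (a : T) (f : T -> nat) :
  \sum_(v in A) (v == a) * f v = (a \in A) * f a.
Proof.
rewrite big_mkcond /= (bigD1 a) //= eqxx big1 ?addn0.
  by case: (a \in A); rewrite ?mul1n ?mul0n.
by move=> v /negbTE ->; case: (v \in A).
Qed.

Lemma sum_set3 (T : finType) (A : {set T}) (a b c : T) (f : T -> nat) :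
  \sum_(v in A) (v \in [set a; b; c]) * f v <= (a \in A) * f a + (b \in A) * f b + (c \in A) * f c.
Proof.
rewrite -!sum_eq1 -!big_split /=; apply: leq_sum => v _.
rewrite !inE -!mulnDl leq_mul2r; case: (v == a); case: (v == b); case: (v == c); by rewrite ?orbT.
Qed.

Lemma disjP (T : finType) (A B : {set T}) :
  reflect (forall x, x \in A -> x \in B -> False) [disjoint A & B].
Proof.
apply: (iffP pred0P) => [H x xA xB|H x] /=.
  by move: (H x) => /=; rewrite xA xB.
by apply/negP => /andP[xA xB]; apply: H xA xB.
Qed.

Lemma leaves_disj n (s t : star n) : s.1 = t.1 ->
  [disjoint star_edges s & star_edges t] -> [disjoint s.2 & t.2].
Proof.
move=> Ec Hd; apply/pred0P => x /=; apply/negP => /andP[Hs Ht].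
move/pred0P: Hd => /(_ [set s.1; x]) /=; rewrite mem_star_edges // Ec mem_star_edges //.
Qed.

Section Main.
Variables (n k : nat) (s1 s2 s3 : star n).
Variable Q : nat.
Hypotheses (k3 : 3 <= k) (HQ : 'C(n, 2) = Q * k) (Hn1 : 2 * k + 1 < n) (Hn2 : n <= 3 * k).
Hypotheses (K1 : is_kstar k s1) (K2 : is_kstar k s2) (K3 : is_kstar k s3).
Hypotheses (D12 : [disjoint star_edges s1 & star_edges s2])
  (D13 : [disjoint star_edges s1 & star_edges s3])
  (D23 : [disjoint star_edges s2 & star_edges s3]).


Lemma arith : [/\ 2 * k + 3 <= n, n + 3 <= Q & 2 * Q <= 4 * n - 3 * k].
Proof. exact: arith1 HQ Hn1 Hn2. Qed.

Lemma card_L (s : star n) : is_kstar k s -> #|s.2| = k.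
Proof. by case/andP => _ /eqP. Qed.

Lemma not_all_eq : ~~ ((s1.1 == s2.1) && (s2.1 == s3.1)).
Proof.
apply/negP => /andP[/eqP e12 /eqP e23].
have d12 := leaves_disj e12 D12.
have d13 := leaves_disj (etrans e12 e23) D13.
have d23 := leaves_disj e23 D23.
have H : #|s1.2 :|: s2.2 :|: s3.2| = 3 * k.
  rewrite cardsU (cardsU s1.2) !card_L //.
  have -> : s1.2 :&: s2.2 = set0 by apply/setP => x; move/pred0P: d12 => /(_ x); rewrite !inE => ->.
  have -> : (s1.2 :|: s2.2) :&: s3.2 = set0.
    apply/setP => x; move/pred0P: d13 => /(_ x); move/pred0P: d23 => /(_ x); rewrite !inE /=.
    by case: (x \in s1.2); case: (x \in s2.2); case: (x \in s3.2).
  by rewrite cards0; clear; lia.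
have : s1.2 :|: s2.2 :|: s3.2 \subset ~: [set s1.1].
  apply/subsetP => x; rewrite !inE => /orP[/orP[]|] Hx; apply/eqP => Ex; subst x.
  - by move: K1 => /andP[/negP].
  - by move: K2 => /andP[/negP]; rewrite -e12.
  - by move: K3 => /andP[/negP]; rewrite -e23 -e12.
move/subset_leq_card; rewrite H cardsCs setCK cards1 card_ord; move: Hn2 k3; clear; lia.
Qed.

Definition C := [set s1.1; s2.1; s3.1].

Lemma card_C : 2 <= #|C| <= 3.
Proof.
apply/andP; split.
  have := not_all_eq; case: (eqVneq s1.1 s2.1) => [e|ne] /= H.
    have : [set s2.1; s3.1] \subset C by apply/subsetP => x; rewrite !inE => /orP[]->; rewrite ?orbT.
    by move/subset_leq_card; rewrite cards2 H.
  have : [set s1.1; s2.1] \subset C by apply/subsetP => x; rewrite !inE => /orP[]->; rewrite ?orbT.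
  by move/subset_leq_card; rewrite cards2 ne.
rewrite /C; apply: leq_trans (leq_card_setU _ _) _; rewrite cards1 -(addn1 2) leq_add2r.
by apply: leq_trans (leq_card_setU _ _) _; rewrite !cards1.
Qed.

Definition ell (v : 'I_n) := (v \in s1.2) + (v \in s2.2) + (v \in s3.2).
Definition DH (H : {set 'I_n}) (v : 'I_n) := k + k * (v \in H).
Definition allow (e : {set 'I_n}) : {set 'I_n} :=
  if e \in star_edges s1 then [set s1.1] else
  if e \in star_edges s2 then [set s2.1] else
  if e \in star_edges s3 then [set s3.1] else e.

Definition Wc (S : {set 'I_n}) (s : star n) : {set {set 'I_n}} :=
  if s.1 \in S then [set [set s.1; x] | x in s.2 :\: S] else set0.

Lemma card_Wc (S : {set 'I_n}) (s : star n) : #|Wc S s| <= (s.1 \in S) * #|s.2 :\: S|.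
Proof. by rewrite /Wc; case: (s.1 \in S); rewrite ?cards0 ?mul1n ?leq_imset_card. Qed.

Lemma in_Wc (S : {set 'I_n}) (s : star n) (e : {set 'I_n}) : s.1 \in S -> e \in star_edges s -> ~~ (e \subset S) -> e \in Wc S s.
Proof.
move=> Hc /imsetP[x Hx ->] HnS; rewrite /Wc Hc; apply/imsetP; exists x => //.
rewrite inE Hx andbT; apply/negP => HxS; move/negP: HnS; apply.
by apply/subsetP => y; rewrite !inE => /orP[]/eqP->.
Qed.

Lemma count_bound (S : {set 'I_n}) :
  #|[set e in complete_edges n | allow e \subset S]| <=
  'C(#|S|, 2) + (s1.1 \in S) * #|s1.2 :\: S| + (s2.1 \in S) * #|s2.2 :\: S| + (s3.1 \in S) * #|s3.2 :\: S|.
Proof.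
have sub : [set e in complete_edges n | allow e \subset S] \subset
   [set A : {set 'I_n} | A \subset S & #|A| == 2] :|: Wc S s1 :|: Wc S s2 :|: Wc S s3.
  apply/subsetP => e; rewrite !inE => /andP[He].
  case: (boolP (e \subset S)) => HeS.
    by rewrite He.
  rewrite /allow; case: ifP => [H1|_].
    by rewrite sub1set => Hc; rewrite (in_Wc Hc H1 HeS) !orbT.
  case: ifP => [H2|_].
    by rewrite sub1set => Hc; rewrite (in_Wc Hc H2 HeS) !orbT.
  case: ifP => [H3|_].
    by rewrite sub1set => Hc; rewrite (in_Wc Hc H3 HeS) !orbT.
  by rewrite (negbTE HeS).
apply: leq_trans (subset_leq_card sub) _.
apply: leq_trans (leq_card_setU _ _) _; apply: leq_add; last exact: card_Wc.
apply: leq_trans (leq_card_setU _ _) _; apply: leq_add; last exact: card_Wc.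
apply: leq_trans (leq_card_setU _ _) _; apply: leq_add; last exact: card_Wc.
by rewrite cards_draws.
Qed.

Lemma sum_DH (H S : {set 'I_n}) : \sum_(v in S) DH H v = k * #|S| + k * #|S :&: H|.
Proof.
rewrite big_split /= sum_nat_const mulnC; congr (_ + _).
by rewrite -big_distrr /= sum_in_mem.
Qed.

Lemma sum_DH_all (H : {set 'I_n}) : \sum_v DH H v = k * n + k * #|H|.
Proof.
rewrite (eq_bigl (fun v => v \in [set: 'I_n])); last by move=> v; rewrite inE.
by rewrite sum_DH setTI cardsT card_ord.
Qed.

Lemma bin2_double' m : 'C(m, 2) * 2 + m = m * m.
Proof. rewrite bin2_double; case: m => [|m] //=; lia. Qed.

Lemma ell_le3 v : ell v <= 3.
Proof. by rewrite /ell; case: (v \in s1.2); case: (v \in s2.2); case: (v \in s3.2). Qed.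

Definition phi (S : {set 'I_n}) (v : 'I_n) :=
  (s1.1 \in S) * (v \in s1.2) + (s2.1 \in S) * (v \in s2.2) + (s3.1 \in S) * (v \in s3.2).

Lemma phi_ell S v : phi S v <= ell v.
Proof.
have h (b : bool) (x : nat) : b * x <= x by case: b; rewrite ?mul1n ?mul0n.
by rewrite /phi /ell; apply: leq_add; [apply: leq_add|]; apply: h.
Qed.

Lemma phiC_bound (S : {set 'I_n}) :
  (s1.1 \notin S) * phi S s1.1 + (s2.1 \notin S) * phi S s2.1 + (s3.1 \notin S) * phi S s3.1 <= 2.
Proof.
rewrite /phi.
case: (s1.1 \in S); case: (s2.1 \in S); case: (s3.1 \in S) => /=;
  rewrite ?mul1n ?mul0n ?add0n ?addn0;
  do ?[case: (_ \in _)]; by [].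
Qed.

Lemma out_sum (S : {set 'I_n}) :
  (s1.1 \in S) * #|s1.2 :\: S| + (s2.1 \in S) * #|s2.2 :\: S| + (s3.1 \in S) * #|s3.2 :\: S|
  = \sum_(v in ~: S) phi S v.
Proof.
have E (L : {set 'I_n}) : #|L :\: S| = \sum_(v in ~: S) (v \in L).
  by rewrite sum_in_mem; apply: eq_card => x; rewrite !inE andbC.
rewrite !E !big_distrr -!big_split /=; by apply: eq_bigr.
Qed.

Lemma ar_F0 C s k' : C * 2 + s = s * s -> s <= 2 * k' -> C <= k' * s.
Proof. move=> h Hs; have hp : s * s <= s * (2 * k').+1 by rewrite leq_mul2l (leqW Hs) orbT. lia. Qed.

Lemma ar_F1 C s k' : C * 2 + s = s * s -> s <= 2 * k' -> 1 <= s -> C + k' <= k' * s.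
Proof.
move=> h Hs s1p; have hp : (s - 1) * s <= (s - 1) * (2 * k') by rewrite leq_mul2l Hs orbT.
have e : (s - 1) * s = s * s - s by rewrite mulnBl mul1n.
have e2 : (s - 1) * (2 * k') = 2 * (k' * s) - 2 * k' by rewrite mulnBl mul1n; lia.
have : k' <= k' * s by rewrite leq_pmulr.
have : s <= s * s by rewrite leq_pmulr.
lia.
Qed.

Lemma case1 (H S : {set 'I_n}) : C \subset H -> #|S| <= 2 * k ->
  'C(#|S|, 2) + (s1.1 \in S) * #|s1.2 :\: S| + (s2.1 \in S) * #|s2.2 :\: S|
    + (s3.1 \in S) * #|s3.2 :\: S| <= k * #|S| + k * #|S :&: H|.
Proof.
move=> HC Hs.
have Lk (s : star n) : is_kstar k s -> #|s.2 :\: S| <= k.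
  by move=> K; rewrite -(card_L K); apply: subset_leq_card; apply: subsetDl.
have l1 := Lk _ K1; have l2 := Lk _ K2; have l3 := Lk _ K3.
have hSC : #|S :&: C| <= #|S :&: H| by apply: subset_leq_card; apply: setIS.
have hs : #|S :&: C| <= #|S| by apply: subset_leq_card; apply: subsetIl.
have m1 x : x \in C -> x \in S -> 1 <= #|S :&: C|.
  by move=> HxC HxS; rewrite card_gt0; apply/set0Pn; exists x; rewrite inE HxC HxS.
have c1C : s1.1 \in C by rewrite !inE eqxx.
have c2C : s2.1 \in C by rewrite !inE eqxx orbT.
have c3C : s3.1 \in C by rewrite !inE eqxx !orbT.
have m3 : s1.1 \in S -> s2.1 \in S -> s3.1 \in S -> 2 <= #|S :&: C|.
  move=> a b c; have : C \subset S by apply/subsetP => x; rewrite !inE => /orP[/orP[]|]/eqP->.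
  by move/setIidPr; rewrite setIC => ->; case/andP: card_C.
have h2 := bin2_double' #|S|.
set s := #|S| in Hs hs h2 *; set h := #|S :&: H| in hSC *; set c := #|S :&: C| in hSC hs m1 m3 *.
set x1 := #|s1.2 :\: S| in l1 *; set x2 := #|s2.2 :\: S| in l2 *; set x3 := #|s3.2 :\: S| in l3 *.
have kk : k * c <= k * h by rewrite leq_mul2l hSC orbT.
have F0 : 'C(s, 2) <= k * s by apply: ar_F0 h2 Hs.
have F1 : 1 <= s -> 'C(s, 2) + k <= k * s by apply: ar_F1 h2 Hs.
have kc1 : 1 <= c -> k <= k * c by move=> ?; rewrite leq_pmulr.
have kc2 : 2 <= c -> k * 2 <= k * c by move=> ?; rewrite leq_mul2l; apply/orP; right.
move: F0 F1 kc1 kc2 kk l1 l2 l3 hs m1 m3.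
case E1: (s1.1 \in S); case E2: (s2.1 \in S); case E3: (s3.1 \in S);
  rewrite /= ?mul1n ?mul0n ?addn0 => F0 F1 kc1 kc2 kk l1 l2 l3 hs m1 m3.
all: try (have := m1 _ c1C E1); try (have := m1 _ c2C E2); try (have := m1 _ c3C E3);
     try (have := m3 isT isT isT).
all: clear -F0 F1 kc1 kc2 kk l1 l2 l3 hs; lia.
Qed.

Lemma case2_main (H S : {set 'I_n}) : C \subset H -> (forall v, v \in H -> v \notin C -> ell v <= 1) ->
  2 * k + 1 <= #|S| ->
  2 * \sum_(v in ~: S) phi S v + 2 * \sum_(v in ~: S) DH H v + #|~: S| <= #|~: S| * (2 * #|S| + #|~: S|).
Proof.
move=> HC HX Hs.
have [n3 _ _] := arith.
set T := ~: S; set t := #|T|; set s := #|S| in Hs *.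
have st : s + t = n by rewrite /s /t /T cardsC card_ord.
pose R := 2 * s + t - 1.
have R4 : 4 * k + 3 <= R by rewrite /R; lia.
pose sg v := if v \in C then R - 4 * k else 1.
have split_phi : \sum_(v in T) phi S v =
    \sum_(v in T) (v \notin C) * phi S v + \sum_(v in T) (v \in C) * phi S v.
  rewrite -big_split /=; apply: eq_bigr => v _; by case: (v \in C); rewrite ?mul1n ?mul0n ?addn0.
have per : forall v, v \in T -> 2 * ((v \notin C) * phi S v) + 2 * DH H v + sg v <= R.
  move=> v _; rewrite /sg /DH; case: (boolP (v \in C)) => vC /=.
    rewrite (subsetP HC v vC) mul0n muln0 add0n muln1; move: R4; clear; lia.
  rewrite mul1n; case: (boolP (v \in H)) => vH /=.
    have := HX v vH vC; have := phi_ell S v; rewrite muln1; move: R4; clear; lia.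
  have := ell_le3 v; have := phi_ell S v; rewrite muln0; move: R4 k3; clear; lia.
have Csum : \sum_(v in T) (v \in C) * phi S v <= 2.
  apply: leq_trans (sum_set3 _ _ _ _ _) _; rewrite !inE; exact: phiC_bound.
have sgsum : 2 * \sum_(v in T) (v \in C) * phi S v <= \sum_(v in T) sg v.
  case: (boolP [exists v in T, v \in C]) => [/existsP[c /andP[cT cC]]|/existsPn none].
    have C4 : 2 * \sum_(v in T) (v \in C) * phi S v <= 4 by move: Csum; clear; lia.
    apply: leq_trans C4 _.
    rewrite (bigD1 c) //=.
    have : \sum_(i in T | i != c) 1 <= \sum_(i in T | i != c) sg i.
      by apply: leq_sum => v _; rewrite /sg; case: (v \in C) => //; move: R4; clear; lia.
    rewrite sum1_card.
    have -> : #|[pred i in T | i != c]| = t - 1.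
      rewrite /t (cardsD1 c T) cT add1n subn1 /=; apply: eq_card => x; rewrite !inE andbC //.
    have t1 : 1 <= t by rewrite /t card_gt0; apply/set0Pn; exists c.
    rewrite /sg cC /R; move: (\sum_(i in T | i != c) _) => X; clear -n3 Hs st t1; lia.
  rewrite big1 ?muln0 // => v vT; by move: (none v); rewrite vT /= => /negbTE ->.
have tot : \sum_(v in T) (2 * ((v \notin C) * phi S v) + 2 * DH H v + sg v) <= t * R.
  have : \sum_(v in T) (2 * ((v \notin C) * phi S v) + 2 * DH H v + sg v) <= \sum_(v in T) R.
    by apply: leq_sum => v vT; apply: per.
  by rewrite sum_nat_const mulnC.
rewrite big_split big_split -!big_distrr in tot.
rewrite split_phi.
have : t * R + t = t * (2 * s + t).
  rewrite /R -mulnSr; congr (_ * _); move: Hs; clear; lia.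
move: tot sgsum; rewrite /sg.
move: (\sum_(v in T) (v \notin C) * phi S v) (\sum_(v in T) (v \in C) * phi S v) (\sum_(v in T) DH H v) (\sum_(i in T) (if i \in C then R - 4 * k else 1)) => a b c d.
rewrite /=; clear; lia.
Qed.

Lemma sum_splitS (f : 'I_n -> nat) (S : {set 'I_n}) :
  \sum_v f v = \sum_(v in S) f v + \sum_(v in ~: S) f v.
Proof.
rewrite (bigID (mem S)) /=; congr (_ + _); apply: eq_bigl => v; by rewrite ?inE.
Qed.

Lemma hall_cond (H : {set 'I_n}) : C \subset H -> (forall v, v \in H -> v \notin C -> ell v <= 1) ->
  #|H| = Q - n ->
  forall S : {set 'I_n}, #|[set e in complete_edges n | allow e \subset S]| <= \sum_(v in S) DH H v.
Proof.
move=> HC HX HH S; apply: leq_trans (count_bound S) _.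
case: (leqP #|S| (2 * k)) => Hs.
  by rewrite sum_DH; apply: case1.
have [n3 nQ _] := arith.
have Hs' : 2 * k + 1 <= #|S| by rewrite addn1.
have M := case2_main HC HX Hs'.
have O := out_sum S.
have tot : \sum_(v in S) DH H v + \sum_(v in ~: S) DH H v = Q * k.
  rewrite -sum_splitS sum_DH_all HH -mulnDr subnKC 1?mulnC //.
  exact: leq_trans (leq_addr 3 n) nQ.
have st : #|S| + #|~: S| = n by rewrite cardsC card_ord.
have b1 := bin2_double' #|S|; have b2 := bin2_double' n; rewrite HQ in b2.
move: M O tot st b1 b2.
move: (\sum_(v in ~: S) phi S v) (\sum_(v in S) DH H v) (\sum_(v in ~: S) DH H v) #|~: S| #|S| 'C(#|S|, 2)
  ((s1.1 \in S) * #|s1.2 :\: S|) ((s2.1 \in S) * #|s2.2 :\: S|) ((s3.1 \in S) * #|s3.2 :\: S|)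
  => o DS DT t s C2 a1 a2 a3.
move=> M O tot st b1 b2; rewrite -st in b2.
have e : (s + t) * (s + t) = s * s + 2 * (s * t) + t * t.
  by rewrite !mulnDl !mulnDr (mulnC t s); lia.
rewrite e in b2; rewrite mulnDr in M.
clear -M O tot b1 b2; lia.
Qed.

Lemma sum_ell : \sum_v ell v = 3 * k.
Proof. by rewrite /ell !big_split /= !sum_mem !card_L //; lia. Qed.

Lemma exists_H : exists H : {set 'I_n},
  [/\ C \subset H, (forall v, v \in H -> v \notin C -> ell v <= 1) & #|H| = Q - n].
Proof.
have [n3 nQ Q2] := arith.
have /andP[C2 C3] := card_C.
set B := [set v : 'I_n | ell v <= 1].
set Y := ~: C :&: B; set Z := ~: C :\: B.
have YZ : #|Y| + #|Z| = n - #|C|.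
  by rewrite cardsID; have := cardsC C; rewrite card_ord; lia.
have Z2 : #|Z| * 2 <= 3 * k.
  rewrite -sum_ell (sum_splitS _ Z) -sum_nat_const.
  apply: leq_trans (leq_addr _ _); apply: leq_sum => v; rewrite !inE => /andP[Hl _]; move: Hl.
  by case: (ltnP 1 (ell v)).
have hY : Q - n - #|C| <= #|Y| by move: YZ Z2 Q2 nQ C3; clear; lia.
have [X [XY cX]] := take_subset hY.
exists (C :|: X); split.
- exact: subsetUl.
- move=> v; rewrite inE => /orP[->//|vX _]; have := subsetP XY v vX.
  by rewrite !inE => /andP[_].
- rewrite cardsU cX.
  have -> : C :&: X = set0.
    apply/setP => v; rewrite !inE; apply/negP => /andP[vC vX].
    by have := subsetP XY v vX; rewrite !inE vC.
  rewrite cards0 subn0 subnKC //; apply: leq_trans C3 _; move: nQ; clear; lia.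
Qed.

Lemma two_other (e : {set 'I_n}) v : #|e| == 2 -> v \in e -> exists2 x, x != v & e = [set v; x].
Proof.
case/cards2P => [a [b [ab ->]]]; rewrite !inE => /orP[]/eqP->.
  by exists b; rewrite // eq_sym.
by exists a => //; rewrite setUC.
Qed.

Definition F := star_edges s1 :|: star_edges s2 :|: star_edges s3.

Lemma allow_notF e : e \notin F -> allow e = e.
Proof. by rewrite /F /allow !inE => /norP[/norP[/negbTE -> /negbTE ->] /negbTE ->]. Qed.

Lemma allow_E1 e : e \in star_edges s1 -> allow e = [set s1.1].
Proof. by rewrite /allow => ->. Qed.
Lemma allow_E2 e : e \in star_edges s2 -> allow e = [set s2.1].
Proof.
move=> H; rewrite /allow H; case: ifP => // H1.
by move/disjP: D12 => /(_ e H1 H).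
Qed.
Lemma allow_E3 e : e \in star_edges s3 -> allow e = [set s3.1].
Proof.
move=> H; rewrite /allow H; case: ifP => [H1|_]; first by move/disjP: D13 => /(_ e H1 H).
case: ifP => // H2; by move/disjP: D23 => /(_ e H2 H).
Qed.

Lemma star_edge2 (s : star n) e : is_kstar k s -> e \in star_edges s -> #|e| == 2.
Proof.
case/andP => Hc _ /imsetP[x Hx ->]; rewrite cards2.
case: (eqVneq s.1 x) => [E|//]; by move: Hc; rewrite E Hx.
Qed.

Lemma AE (g : {set 'I_n} -> 'I_n) v (s : star n) :
  valid allow g (complete_edges n) -> is_kstar k s ->
  (forall e, e \in star_edges s -> allow e = [set s.1]) ->
  [set e in complete_edges n | g e == v] :&: star_edges s = if s.1 == v then star_edges s else set0.
Proof.
move=> Hg K Ha; apply/setP => e; rewrite !inE.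
case: (boolP (e \in star_edges s)) => He; last first.
  by rewrite andbF; case: (s.1 == v); rewrite ?inE // (negbTE He).
have eK : e \in complete_edges n by rewrite inE (star_edge2 K He).
have := Hg e eK; rewrite Ha // inE => /eqP ->.
by move: eK; rewrite inE => ->; case: (s.1 == v); rewrite ?inE ?He.
Qed.

Lemma card_if (s : star n) v : is_kstar k s ->
  #|if s.1 == v then star_edges s else set0| = k * (s.1 == v).
Proof. by move=> K; case: (s.1 == v); [rewrite (star_edges_card K); exact: (esym (muln1 k)) | rewrite cards0; exact: (esym (muln0 k))]. Qed.

Lemma loadF (g : {set 'I_n} -> 'I_n) v : valid allow g (complete_edges n) ->
  #|[set e in complete_edges n | g e == v] :&: F| = k * ((s1.1 == v) + (s2.1 == v) + (s3.1 == v)).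
Proof.
move=> Hg; rewrite /F !setIUr (AE v Hg K1 allow_E1) (AE v Hg K2 allow_E2) (AE v Hg K3 allow_E3).
have dj (s t : star n) : [disjoint star_edges s & star_edges t] ->
    forall X Y : {set {set 'I_n}}, X \subset star_edges s -> Y \subset star_edges t -> X :&: Y = set0.
  move=> D X Y /subsetP HX /subsetP HY; apply/setP => e; rewrite !inE; apply/negP => /andP[a b].
  by move/disjP: D => /(_ e (HX e a) (HY e b)).
have sub (s : star n) : (if s.1 == v then star_edges s else set0) \subset star_edges s.
  by case: (s.1 == v); rewrite ?sub0set.
rewrite cardsU (cardsU (if _ then _ else _)) !card_if //.
rewrite (dj _ _ D12 _ _ (sub s1) (sub s2)) setIUl (dj _ _ D13 _ _ (sub s1) (sub s3))
        (dj _ _ D23 _ _ (sub s2) (sub s3)) setU0 !cards0; lia.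
Qed.

Definition Nv (g : {set 'I_n} -> 'I_n) (v : 'I_n) :=
  [set x | (x != v) && ([set v; x] \notin F) && (g [set v; x] == v)].

Lemma card_Nv (g : {set 'I_n} -> 'I_n) v : valid allow g (complete_edges n) ->
  #|[set e in complete_edges n | g e == v] :&: F| + #|Nv g v| = load g (complete_edges n) v.
Proof.
move=> Hg; rewrite /load -(cardsID F [set e in complete_edges n | g e == v]); congr (_ + _).
have -> : [set e in complete_edges n | g e == v] :\: F = [set [set v; x] | x in Nv g v].
  apply/setP => e; rewrite !inE; apply/idP/idP.
    case/andP => eF /andP[eK /eqP ge].
    have := Hg e; rewrite inE => /(_ eK); rewrite allow_notF; last by rewrite /F !inE.
    rewrite ge => ve.
    have [x xv Ee] := two_other eK ve.
    apply/imsetP; exists x => //; rewrite inE xv -Ee ge eqxx andbT /F !inE; exact: eF.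
  case/imsetP => x; rewrite inE => /andP[/andP[xv xF] /eqP gx] ->.
  move: xF; rewrite /F !inE => -> /=; rewrite gx eqxx cards2 andbT eq_sym.
  by case: (eqVneq x v) xv.
apply/esym/card_in_imset => x y; rewrite !inE => /andP[/andP[xv _] _] /andP[/andP[yv _] _] E.
have : x \in [set v; y] by rewrite -E !inE eqxx orbT.
by rewrite !inE (negbTE xv) => /eqP.
Qed.

Lemma completable3 : completable k [set s1; s2; s3].
Proof.
have [n3 nQ _] := arith.
have [H [HC HX HH]] := exists_H.
have n0 : 0 < n by lia.
have [g [Hg Hl]] := hall_cap (Ordinal n0) (hall_cond HC HX HH).
have Hsum : \sum_v DH H v = #|complete_edges n|.
  rewrite sum_DH_all /complete_edges card_draws card_ord HQ HH -mulnDr subnKC; lia.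
have Hex := load_exact Hl Hsum.
have dvN : forall v, k %| #|Nv g v|.
  move=> v; have := card_Nv v Hg; rewrite loadF // Hex /DH => E.
  have : k %| k * ((s1.1 == v) + (s2.1 == v) + (s3.1 == v)) + #|Nv g v|.
    by rewrite E dvdn_add // dvdn_mulr.
  by rewrite dvdn_addr ?dvdn_mulr.
have k0 : 0 < k by lia.
have : forall v, exists P : {set {set 'I_n}},
    (forall B, B \in P -> B \subset Nv g v /\ #|B| = k) /\
    (forall x, x \in Nv g v -> exists2 B, B \in P & x \in B) /\
    (forall B1 B2 x, B1 \in P -> B2 \in P -> x \in B1 -> x \in B2 -> B1 = B2).
  by move=> v; apply: chunks.
case/fin_all_exists => P HP.
set New := [set ((v, B) : star n) | v in [set: 'I_n], B in P v].
exists ([set s1; s2; s3] :|: New); split; first exact: subsetUl.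
have inNew s : s \in New -> exists v B, [/\ s = (v, B), B \in P v, B \subset Nv g v & #|B| = k].
  case/imset2P => v B _ HB ->; have [/(_ B HB) [a b] _] := HP v.
  by exists v, B.
have inA s : s \in [set s1; s2; s3] -> [\/ s = s1, s = s2 | s = s3].
  by rewrite !inE => /orP[/orP[]|]/eqP->; [constructor 1|constructor 2|constructor 3].
have edgesF s : s \in [set s1; s2; s3] -> star_edges s \subset F.
  by move/inA => [] ->; apply/subsetP => e He; rewrite /F !inE He ?orbT.
have notF (v : 'I_n) (B : {set 'I_n}) (e : {set 'I_n}) : B \subset Nv g v -> e \in star_edges ((v, B) : star n) -> e \notin F.
  move=> /subsetP BN /imsetP[x Hx ->] /=; have := BN x Hx; rewrite inE.
  by case/andP => /andP[].
have kA s : s \in [set s1; s2; s3] -> is_kstar k s by move/inA => [] ->.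
split; first split.
- move=> s; rewrite inE => /orP[/kA //|/inNew [v [B [-> HB BN cB]]]].
  rewrite /is_kstar /= cB eqxx andbT; apply/negP => vB.
  by have := subsetP BN v vB; rewrite inE eqxx.
- move=> s t; rewrite inE => Hs; rewrite inE => Ht st.
  case/orP: Hs => [Hs|Hs]; case/orP: Ht => [Ht|Ht].
  + move: st; case/inA: Hs => ->; case/inA: Ht => -> //; rewrite ?eqxx // => _;
      by rewrite // disjoint_sym.
  + case/inNew: Ht => v [B [-> _ BN _]]; apply/disjP => e e1 e2.
    by have := subsetP (edgesF s Hs) e e1; apply/negP; apply: notF BN e2.
  + case/inNew: Hs => v [B [-> _ BN _]]; apply/disjP => e e1 e2.
    by have := subsetP (edgesF t Ht) e e2; apply/negP; apply: notF BN e1.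
  + case/inNew: Hs => v [B [Es HB BN _]]; case/inNew: Ht => w [B' [Et HB' BN' _]].
    apply/disjP => e /imsetP[x Hx Ex] /imsetP[y Hy Ey]; rewrite Es Et /= in Ex Ey Hx Hy.
    have := subsetP BN x Hx; have := subsetP BN' y Hy; rewrite !inE.
    case/andP => /andP[yw _] /eqP gy; case/andP => /andP[xv _] /eqP gx.
    case: (eqVneq v w) => [vw|vw].
      subst w; have xy : x = y.
        have : x \in [set v; y] by rewrite -Ey Ex !inE eqxx orbT.
        by rewrite !inE (negbTE xv) => /eqP.
      subst y; have [_ [_ U]] := HP v; have EB := U B B' x HB HB' Hx Hy.
      by move: st; rewrite Es Et EB eqxx.
    have : v \in [set w; y] by rewrite -Ey Ex !inE eqxx.
    rewrite !inE (negbTE vw) => /eqP vy; subst y.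
    by move: vw; rewrite -gx -gy -Ex -Ey eqxx.
- apply/setP => e; apply/bigcupP/idP.
    case=> s; rewrite inE => /orP[/kA K|/inNew [v [B [-> _ BN cB]]]] He.
      by rewrite inE (star_edge2 K He).
    case/imsetP: He => x Hx -> /=; rewrite inE cards2.
    have := subsetP BN x Hx; rewrite inE => /andP[/andP[xv _] _]; by case: (eqVneq v x) xv => // ->; rewrite eqxx.
  move=> eK; case: (boolP (e \in F)) => eF.
    move: eF; rewrite /F !inE => /orP[/orP[]|] He.
    + by exists s1; rewrite // !inE eqxx.
    + by exists s2; rewrite // !inE eqxx orbT.
    + by exists s3; rewrite // !inE eqxx !orbT.
  have ge := Hg e eK; rewrite allow_notF in ge; last exact: eF.
  have eK2 : #|e| == 2 by move: eK; rewrite inE.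
  have [x xv Ee] := two_other eK2 ge.
  have xN : x \in Nv g (g e) by rewrite inE xv -Ee eF eqxx.
  have [_ [Cov _]] := HP (g e); have [B HB xB] := Cov x xN.
  exists (g e, B).
    by rewrite inE; apply/orP; right; apply/imset2P; exists (g e) B; rewrite ?inE.
  by apply/imsetP; exists x.
Qed.
End Main.

Theorem lemma10 (k n : nat) (A : {set star n}) :
  3 <= k -> admissible k n -> 2 * k + 1 < n -> n <= 3 * k ->
  partial_kstar_design k A -> #|A| = 3 ->
  completable k A.
Proof.
move=> k3 /eqP adm Hn1 Hn2 [HK HD] cA.
have : 0 < #|A| by rewrite cA.
rewrite card_gt0 => /set0Pn [t1 H1].
have : #|A :\ t1| == 2 by move: cA; rewrite (cardsD1 t1) H1 add1n => [[->]].
case/cards2P => [t2 [t3 [t23 EA]]].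
have H2' : t2 \in A :\ t1 by rewrite EA !inE eqxx.
have H3' : t3 \in A :\ t1 by rewrite EA !inE eqxx orbT.
move: H2' H3'; rewrite !inE => /andP[n12 H2] /andP[n13 H3].
rewrite eq_sym in n12; rewrite eq_sym in n13.
have -> : A = [set t1; t2; t3].
  by rewrite -(setD1K H1) EA; apply/setP => x; rewrite !inE orbA.
have HQ : 'C(n, 2) = ('C(n, 2) %/ k) * k by apply/eqP; rewrite eq_sym -dvdn_eq /dvdn adm.
by apply: (completable3 (Q := 'C(n, 2) %/ k)) => //; try apply: HK; try apply: HD.
Qed.
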